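(* Let $q$ be a prime power. For every integer $s$ with $3\leq s\leq \frac{q+4}{2}$ there exists (and one may explicitly construct) an ordered orthogonal array of type $\mathrm{OOA}(4,s,2,q)$.
   Context: An ordered orthogonal array of type $\mathrm{OOA}(4,s,2,v)$ is a $2s\times v^4$ array with entries from an alphabet of size $v$, whose rows are labeled $(i,j)$, $1\le i\le s$, $j\in\{1,2\}$, such that for every set $T$ of $4$ rows which is top-justified (i.e. whenever $(i,2)\in T$ then $(i,1)\in T$), the $4\times v^4$ subarray formed by the rows of $T$ contains each $4$-tuple over the alphabet exactly once as a column. *)

(* Defs.v *)
From mathcomp Require Import all_boot.
Set Implicit Arguments. Unset Strict Implicit. Unset Printing Implicit Defensive.

Definition prime_power (q : nat) : Prop :=
  exists p k : nat, prime p /\ 0 < k /\ q = p ^ k.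

(* Rows of an OOA(t,s,2,v) are labelled (i,j) with i : 'I_s and j : 'I_2;
   the paper's level j = 1 is ord0 and level j = 2 is Ordinal 1 < 2. *)
Definition top_justified (s : nat) (T : {set 'I_s * 'I_2}) : Prop :=
  forall i : 'I_s, (i, (@Ordinal 2 1 isT)) \in T -> (i, (@Ordinal 2 0 isT)) \in T.

Definition is_OOA4 (s v : nat) (A : 'I_s * 'I_2 -> 'I_(v ^ 4) -> 'I_v) : Prop :=
  forall f : 'I_4 -> 'I_s * 'I_2,
    injective f ->
    top_justified [set f k | k in 'I_4] ->
    forall t : 'I_4 -> 'I_v,
      exists! c : 'I_(v ^ 4), forall k : 'I_4, A (f k) c = t k.

Definition OOA_4_s_2 (s v : nat) : Prop :=
  exists A : 'I_s * 'I_2 -> 'I_(v ^ 4) -> 'I_v, is_OOA4 A.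

(* Main.v *)
Require Import Defs.
From mathcomp Require Import all_boot all_algebra all_field zify.
Set Implicit Arguments. Unset Strict Implicit. Unset Printing Implicit Defensive.

Lemma transfer (s v : nat) (S C : finType) (hS : #|S| = v) (hC : #|C| = v ^ 4)
  (B : 'I_s * 'I_2 -> C -> S) :
  (forall f : 'I_4 -> 'I_s * 'I_2, injective f ->
     top_justified [set f k | k in 'I_4] ->
     injective (fun c => [ffun k => B (f k) c])) ->
  OOA_4_s_2 s v.
Proof.
move=> Hinj.
pose eS (x : S) : 'I_v := cast_ord hS (enum_rank x).
pose dS (i : 'I_v) : S := enum_val (cast_ord (esym hS) i).
have eSK : cancel dS eS by move=> i; rewrite /eS /dS enum_valK cast_ordKV.
have eS_inj : injective eS.
  by move=> x y /(congr1 (cast_ord (esym hS))); rewrite !cast_ordK => /enum_rank_inj.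
pose dC (c : 'I_(v ^ 4)) : C := enum_val (cast_ord (esym hC) c).
pose eC (c : C) : 'I_(v ^ 4) := cast_ord hC (enum_rank c).
have dCK : cancel eC dC by move=> c; rewrite /eC /dC cast_ordK enum_rankK.
have eCK : cancel dC eC by move=> c; rewrite /eC /dC enum_valK cast_ordKV.
exists (fun r c => eS (B r (dC c))) => f finj ftj t.
have ginj := Hinj f finj ftj.
have hcard : #|{ffun 'I_4 -> S}| <= #|C| by rewrite card_ffun hS hC card_ord.
have /codomP [c0 Hc0] := inj_card_onto ginj hcard [ffun k => dS (t k)].
exists (eC c0); split.
  move=> k; rewrite dCK.
  by have := congr1 (fun g : {ffun 'I_4 -> S} => g k) Hc0; rewrite /= !ffunE => <-.
move=> c' Hc'.
rewrite -[c']eCK; congr eC; apply: ginj; rewrite /= -Hc0.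
apply/ffunP => k; rewrite !ffunE; apply: eS_inj; by rewrite Hc' eSK.
Qed.
Import GRing.Theory.
Local Open Scope ring_scope.
Section Alg.
Variable F : fieldType.

Lemma coprime_prod (I : eqType) (G : I -> {poly F}) x (r : seq I) :
  (forall i, i \in r -> coprimep (G x) (G i)) -> coprimep (G x) (\prod_(i <- r) G i).
Proof.
elim: r => [|y r IH] H; first by rewrite big_nil coprimep1.
rewrite big_cons coprimepMr H ?mem_head //= IH // => i ir.
by apply: H; rewrite in_cons ir orbT.
Qed.

Lemma prod_dvd (I : eqType) (G : I -> {poly F}) p (r : seq I) :
  uniq r -> (forall i j, i \in r -> j \in r -> i != j -> coprimep (G i) (G j)) ->
  (forall i, i \in r -> G i %| p) -> \prod_(i <- r) G i %| p.
Proof.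
elim: r => [|y r IH] /= Hu Hc Hd; first by rewrite big_nil dvd1p.
case/andP: Hu => yr ur.
rewrite big_cons Gauss_dvdp ?Hd ?mem_head ?IH //.
- by move=> i j ir jr; apply: Hc; rewrite in_cons ?ir ?jr orbT.
- by move=> i ir; apply: Hd; rewrite in_cons ir orbT.
apply: coprime_prod => i ir; apply: Hc; rewrite ?in_cons ?ir ?eqxx ?orbT //.
by apply/eqP => E; rewrite E ir in yr.
Qed.

Lemma double_root (p : {poly F}) x :
  p.[x] = 0 -> p^`().[x] = 0 -> ('X - x%:P) ^+ 2 %| p.
Proof.
move=> h0 h1.
have : ('X - x%:P) %| p by rewrite dvdp_XsubCl /root h0.
case/dvdpP => q Dp.
move: h1; rewrite Dp derivM derivXsubC hornerD !hornerE subrr mulr0 ?add0r ?addr0 ?mulr1.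
move=> hq; have : ('X - x%:P) %| q by rewrite dvdp_XsubCl /root hq.
case/dvdpP => r Dq.
by rewrite Dq -mulrA -expr2 dvdp_mull.
Qed.


Variable s : nat.
Variable a : 'I_s -> option F.
Hypothesis a_inj : injective a.

Definition o0 : 'I_2 := @Ordinal 2 0 isT.
Definition o1 : 'I_2 := @Ordinal 2 1 isT.
Definition i2 : 'I_4 := @Ordinal 4 2 isT.
Definition i3 : 'I_4 := @Ordinal 4 3 isT.

Definition Pc (c : {ffun 'I_4 -> F}) : {poly F} := \poly_(i < 4) c (inord i).

Definition Bv (r : 'I_s * 'I_2) (c : {ffun 'I_4 -> F}) : F :=
  match a r.1 with
  | Some x => if r.2 == o0 then (Pc c).[x] else (Pc c)^`().[x]
  | None => if r.2 == o0 then c i3 else c i2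
  end.

Lemma Pc_sub c c' : Pc (c - c') = Pc c - Pc c'.
Proof.
apply/polyP => i; rewrite coefB !coef_poly; case: ltnP => _; last by rewrite subr0.
by rewrite !ffunE.
Qed.

Lemma Bv_sub r c c' : Bv r (c - c') = Bv r c - Bv r c'.
Proof.
rewrite /Bv Pc_sub; case: (a r.1) => [x|]; case: ifP => _;
  by rewrite ?derivB ?hornerE ?ffunE.
Qed.

Lemma pair_ord (i : 'I_s) (S : {set 'I_s * 'I_2}) (j : 'I_2) :
  (j == o0) || (j == o1).
Proof. by case: j => [[|[|]]]. Qed.

Lemma kernel (S : {set 'I_s * 'I_2}) c :
  top_justified S -> #|S| = 4%N -> (forall r, r \in S -> Bv r c = 0) -> c = 0.
Proof.
move=> tj cS H.
have tj' : forall i, (i, o1) \in S -> (i, o0) \in S by exact: tj.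
pose p := Pc c.
pose m (i : 'I_s) := (((i, o0) \in S) + ((i, o1) \in S))%N.
have msum : (\sum_i m i = 4)%N.
  rewrite -cS -sum1_card.
  have -> : (\sum_(r in S) 1 = \sum_i \sum_j (if (i, j) \in S then 1 else 0))%N.
    by rewrite pair_bigA big_mkcond; apply: eq_bigr => -[i j] _.
  apply: eq_bigr => i _; rewrite big_ord_recl big_ord_recl big_ord0 addn0 /m.
  have -> : lift ord0 ord0 = o1 by apply: val_inj.
  have -> : ord0 = o0 by apply: val_inj.
  by case: ((i, o0) \in S); case: ((i, o1) \in S).
pose G (i : 'I_s) := if a i is Some x then ('X - x%:P) ^+ m i else 1.
pose deg (i : 'I_s) := if a i is Some x then m i else 0%N.
have Gdiv : \prod_i G i %| p.
  apply: prod_dvd; first exact: index_enum_uniq.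
    move=> i j _ _ nij; rewrite /G.
    case Ei: (a i) => [x|]; case Ej: (a j) => [y|]; rewrite ?coprime1p ?coprimep1 //.
    apply: coprimep_expl; apply: coprimep_expr; rewrite coprimep_XsubC root_XsubC.
    apply/eqP => yx; move/negP: nij; apply; apply/eqP; apply: a_inj; by rewrite Ei Ej yx.
  move=> i _; rewrite /G /m; case Ei: (a i) => [x|]; last exact: dvd1p.
  have H0 : (i, o0) \in S -> p.[x] = 0.
    by move=> /H; rewrite /Bv /= Ei ?eqxx.
  have H1 : (i, o1) \in S -> p^`().[x] = 0.
    by move=> /H; rewrite /Bv /= Ei.
  case E1: ((i, o1) \in S).
    by rewrite (tj' _ E1) /=; apply: double_root; [apply: H0; apply: tj'|apply: H1].
  case E0: ((i, o0) \in S); last by rewrite expr0 dvd1p.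
  by rewrite /= expr1 dvdp_XsubCl /root H0.
have sizeG : size (\prod_i G i) = (\sum_i deg i).+1.
  rewrite size_prod; last first.
    by move=> i _; rewrite /G; case: (a i) => [x|]; rewrite ?oner_eq0 // expf_neq0 // polyXsubC_eq0.
  have -> : (\sum_i size (G i) = \sum_i deg i + \sum_(i : 'I_s) 1)%N.
    rewrite -big_split; apply: eq_bigr => i _; rewrite /G /deg.
    by case: (a i) => [x|]; rewrite ?size_poly1 ?size_exp_XsubC; rewrite [in RHS]/= addn1.
  by rewrite sum_nat_const muln1 -addSn addnK.
have sizep : (size p <= \sum_i deg i)%N.
  case: (pickP (fun i => a i == None)) => [i0 /eqP Ei0|hnone].
    have -> : (\sum_i deg i = \sum_(i | i != i0) m i)%N.
      rewrite (bigD1 i0) //= {1}/deg Ei0 add0n; apply: eq_bigr => i ni.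
      rewrite /deg; case Ei: (a i) => [x|] //.
      by move: ni; rewrite (a_inj (etrans Ei (esym Ei0))) eqxx.
    have : (\sum_(i | i != i0) m i = 4 - m i0)%N.
      have := msum; rewrite (bigD1 i0) //= => <-; exact: (esym (addKn _ _)).
    move=> ->; apply/leq_sizeP => j hj; rewrite coef_poly.
    case: ltnP => // j4.
    have H0 : (i0, o0) \in S -> c i3 = 0 by move=> /H; rewrite /Bv /= Ei0 ?eqxx.
    have H1 : (i0, o1) \in S -> c i2 = 0 by move=> /H; rewrite /Bv /= Ei0.
    move: hj; rewrite /m.
    case E1: ((i0, o1) \in S).
      rewrite (tj' _ E1) /= => hj.
      have : (j == 2%N) || (j == 3%N) by move: hj j4; case: j => [|[|[|[|]]]].
      case/orP => /eqP jE.
        by rewrite jE -(H1 E1); congr (c _); apply: val_inj; rewrite /= inordK.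
      by rewrite jE -(H0 (tj' _ E1)); congr (c _); apply: val_inj; rewrite /= inordK.
    case E0: ((i0, o0) \in S) => /= hj; last by move: hj j4; rewrite subn0 => /leq_trans h /h.
    have jE : j = 3%N by move: hj j4; case: j => [|[|[|[|]]]].
    by rewrite jE -(H0 E0); congr (c _); apply: val_inj; rewrite /= inordK.
  have -> : (\sum_i deg i = \sum_i m i)%N.
    apply: eq_bigr => i _; rewrite /deg; case Ei: (a i) => [x|] //.
    by move: (hnone i); rewrite Ei.
  by rewrite msum size_poly.
have p0 : p = 0.
  apply/eqP; apply: contraT => pn0.
  have := dvdp_leq pn0 Gdiv; rewrite sizeG => /leq_trans /(_ sizep).
  by rewrite ltnn.
apply/ffunP => k; have := congr1 (fun q : {poly F} => q`_k) p0.
by rewrite /= coef_poly ltn_ord coef0 inord_val !ffunE.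
Qed.

End Alg.

Local Close Scope ring_scope.

Theorem corollary5p5 (q : nat) :
  prime_power q ->
  forall s : nat, 3 <= s -> 2 * s <= q + 4 -> OOA_4_s_2 s q.
Proof.
move=> [p [k [pp [k0 ->]]]] s _ hs.
have [F _ cardF] := pPrimePowerField pp k0.
have q1 : 1 < p ^ k by rewrite (ltn_exp2l 0) // prime_gt1.
have hsF : s <= #|{: option F}|.
  rewrite card_option cardF; lia.
pose a (i : 'I_s) : option F := enum_val (widen_ord hsF i).
have a_inj : injective a.
  move=> i j /enum_val_inj /(congr1 val) /= E; exact: val_inj.
apply: (@transfer s (p ^ k) F {ffun 'I_4 -> F} cardF _ (@Bv F s a)).
  by rewrite card_ffun card_ord cardF.
move=> f finj ftj c c' E.
apply/eqP; rewrite -GRing.subr_eq0; apply/eqP.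
apply: (kernel a_inj ftj).
  by rewrite card_imset // card_ord.
move=> r /imsetP [kk _ ->].
have := congr1 (fun g : {ffun 'I_4 -> F} => g kk) E; rewrite /= !ffunE => Ek.
by rewrite Bv_sub Ek GRing.subrr.
Qed.
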